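(* Let $T$ be a $\pi$-increasing tree, let $V_1\subsetneq V(T)$ be a nonempty set which is a union of blocks of $\pi$, and let $v_1\in V_1$. Then $T$ can be written as $T=\mathrm{spl}(T_1,v_1;T_2,v_2)$ for some $\pi$-increasing trees $T_1$, $T_2$ with vertex-sets $V_1$ and $V_2=V(T)\setminus V_1$ respectively and some vertex $v_2\in V_2$, if and only if $V_1=\bigcup_{i\in I}\pi_i$ where $\{\pi_i: i\in I\}$ is a union of vertex-sets of connected components of $G_{v_1}(T)$. In this case, $T_1$, $T_2$ and $v_2$ are unique.
   Context: Standing assumptions: $r\ge2$ and $\pi$ is a set partition of $\{1,\dots,r\}$ having $\{1\}$ as a block; its blocks are $\pi_i$ with maxima $\mu_i$; $\pi^x$ denotes the block containing $x$. An unordered increasing tree is a rooted tree on distinct positive integers, sons unordered, each son larger than its father. A $\pi$-increasing tree is an unordered increasing tree $T$ whose vertex-set is a union of blocks of $\pi$ and such that for any two elements $i<j$ of a same block of $\pi$ contained in $V(T)$, $i$ is an ancestor of $j$ in $T$. $v$-decomposition: for a vertex $v$ of $T$ with chain $a_1<\dots<a_\ell=v$ from the root to $v$, removing the chain edges leaves components $T^{(a_j)}$ rooted at $a_j$. Splice: for unordered increasing trees $T_1,T_2$ with disjoint vertex-sets and $v_1\in V(T_1)$, $v_2\in V(T_2)$, $v_1>v_2$, $\mathrm{spl}(T_1,v_1;T_2,v_2)$ is the tree on $V(T_1)\cup V(T_2)$ obtained by merging the root-to-$v_1$ chain of $T_1$ and the root-to-$v_2$ chain of $T_2$ into one increasing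 chain (ending at $v_1$) and attaching at each chain vertex its component from the $v_1$-decomposition of $T_1$ or the $v_2$-decomposition of $T_2$. $v$-dependence graph $G_v(T)$: directed graph on the blocks of $\pi$ contained in $V(T)$; for each such block $\pi_i$ whose maximum $\mu_i$ is not on the chain $a_1,\dots,a_\ell$, $\mu_i$ is a non-root vertex of a unique $T^{(a_j)}$ and there is an edge (possibly a loop) $\pi_i\to\pi^{a_j}$; no other edges. Connected components are taken ignoring directions. *)

(* Defs.v *)
From mathcomp Require Import all_boot.
Set Implicit Arguments. Unset Strict Implicit. Unset Printing Implicit Defensive.

(* Vertices live in 'I_n (in the theorem n = r.+1, so that labels 1..r are
   available; 0 is excluded from vertex sets).
   A tree is a pair (vertex set, parent map); the parent map sends every
   non-root vertex to Some parent and everything else (root, non-vertices)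
   to None, so Leibniz equality of pairs is equality of rooted trees. *)
Section Defs.
Variable n : nat.

Definition tree := ({set 'I_n} * {ffun 'I_n -> option 'I_n})%type.
Definition verts (T : tree) : {set 'I_n} := T.1.
Definition par (T : tree) (x : 'I_n) : option 'I_n := T.2 x.

Definition is_itree (T : tree) : Prop :=
  [/\ verts T != set0,
      (forall v, v \in verts T -> 0 < v),
      (forall v u, par T v = Some u -> [/\ v \in verts T, u \in verts T & u < v])
    & (forall v w, v \in verts T -> w \in verts T ->
         par T v = None -> par T w = None -> v = w)].

Definition anc (T : tree) (a x : 'I_n) : bool :=
  connect (fun y z => par T y == Some z) x a.

Definition chain (T : tree) (v : 'I_n) : {set 'I_n} := [set a | anc T a v].

Definition omax (S : {set 'I_n}) : option 'I_n :=
  [pick y in S | [forall z in S, z <= y]].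

(* root a_j of the component T^(a_j) of the v-decomposition containing x:
   the deepest chain vertex that is an ancestor of x *)
Definition chainroot (T : tree) (v x : 'I_n) : 'I_n :=
  odflt x (omax [set a | anc T a x && anc T a v]).

Definition union_of_blocks (P : {set {set 'I_n}}) (U : {set 'I_n}) : Prop :=
  exists S : {set {set 'I_n}}, S \subset P /\ U = cover S.

Definition pi_increasing (P : {set {set 'I_n}}) (T : tree) : Prop :=
  [/\ is_itree T, union_of_blocks P (verts T)
    & forall B, B \in P -> B \subset verts T ->
        forall i j, i \in B -> j \in B -> i < j -> anc T i j].

(* spl(T1,v1;T2,v2): merge the two chains into one increasing chain, keep all
   other parent links (i.e. the components of the decompositions). *)
Definition pred_in (C : {set 'I_n}) (x : 'I_n) : option 'I_n :=
  omax [set y in C | y < x].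

Definition splice (T1 : tree) (v1 : 'I_n) (T2 : tree) (v2 : 'I_n) : tree :=
  let C := chain T1 v1 :|: chain T2 v2 in
  (verts T1 :|: verts T2,
   [ffun x => if x \in C then pred_in C x
              else if x \in verts T1 then par T1 x else par T2 x]).

Definition blocks_in (P : {set {set 'I_n}}) (U : {set 'I_n}) : {set {set 'I_n}} :=
  [set B in P | B \subset U].

Definition dep_edge (P : {set {set 'I_n}}) (T : tree) (v : 'I_n)
    (B B' : {set 'I_n}) : bool :=
  [&& B \in blocks_in P (verts T), B' \in blocks_in P (verts T) &
      if omax B is Some m then
        (m \notin chain T v) && (B' == pblock P (chainroot T v m))
      else false].

Definition dep_uedge (P : {set {set 'I_n}}) (T : tree) (v : 'I_n) : rel {set 'I_n} :=
  fun B B' => dep_edge P T v B B' || dep_edge P T v B' B.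

Definition union_of_components (P : {set {set 'I_n}}) (T : tree) (v : 'I_n)
    (S : {set {set 'I_n}}) : Prop :=
  S \subset blocks_in P (verts T) /\
  (forall B B', B \in S -> connect (dep_uedge P T v) B B' -> B' \in S).

(* T = spl(T1,v1;T2,v2) with T1, T2 pi-increasing on V1 and V(T)\V1, v2 in V2,
   v1 > v2 (required for spl to be defined) *)
Definition spl_decomp (P : {set {set 'I_n}}) (T : tree) (V1 : {set 'I_n})
    (v1 : 'I_n) (T1 T2 : tree) (v2 : 'I_n) : Prop :=
  [/\ pi_increasing P T1 /\ pi_increasing P T2,
      verts T1 = V1 /\ verts T2 = verts T :\: V1,
      v2 \in verts T2, v2 < v1 & T = splice T1 v1 T2 v2].

End Defs.

(* Main.v *)
Require Import Defs.
From mathcomp Require Import all_boot.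
Set Implicit Arguments. Unset Strict Implicit. Unset Printing Implicit Defensive.

Section Gen.
Variable n : nat.
Implicit Types (T : tree n) (x y a b u v : 'I_n) (D S W : {set 'I_n}).

Lemma ord_ind (Pr : 'I_n -> Prop) :
  (forall x, (forall y : 'I_n, y < x -> Pr y) -> Pr x) -> forall x, Pr x.
Proof.
move=> IH.
suff H : forall k (x : 'I_n), x < k -> Pr x by move=> x; apply: (H x.+1).
elim=> [|k IHk] x // Hx; apply: IH => y Hy; apply: IHk.
exact: leq_trans Hy Hx.
Qed.

Lemma omaxP S y : omax S = Some y -> y \in S /\ forall z, z \in S -> z <= y.
Proof.
rewrite /omax; case: pickP => // z /andP[zS /forallP H] [<-]; split=> // w wS.
by have := H w; rewrite wS.
Qed.

Lemma omax_some S : S != set0 -> exists y, omax S = Some y.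
Proof.
case/set0Pn=> y0 y0S.
rewrite /omax; case: pickP => [z _|H]; first by exists z.
have [i iS Hi] := @arg_maxnP _ y0 (mem S) val y0S.
have iS' : i \in S by exact: iS.
have := H i; rewrite iS' /=; move/negbT/negP; case.
by apply/forallP=> z; apply/implyP=> zS; apply: Hi.
Qed.

Lemma omax_eq S y : y \in S -> (forall z, z \in S -> z <= y) -> omax S = Some y.
Proof.
move=> yS H; have [z Hz] : exists z, omax S = Some z.
  by apply: omax_some; apply/set0Pn; exists y.
have [zS Hz'] := omaxP Hz; rewrite Hz; congr Some; apply: val_inj; apply/eqP.
by rewrite eqn_leq H // Hz'.
Qed.

Lemma omax_none S : omax S = None -> S = set0.
Proof.
move=> H; apply/eqP; apply: contraT=> /omax_some [y]; by rewrite H.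
Qed.

Lemma pred_inS D x u : pred_in D x = Some u ->
  [/\ u \in D, u < x & forall y, y \in D -> y < x -> y <= u].
Proof.
move/omaxP=> []; rewrite inE => /andP[uD ux] H; split=> // y yD yx.
by apply: H; rewrite inE yD.
Qed.

Lemma pred_inN D x : pred_in D x = None -> forall y, y \in D -> x <= y.
Proof.
move/omax_none=> H y yD; rewrite leqNgt; apply/negP=> yx.
by have := in_set0 y; rewrite -H inE yD yx.
Qed.

Lemma ancE T a x : anc T a x = (a == x) ||
  (if par T x is Some u then anc T a u else false).
Proof.
rewrite /anc; apply/idP/idP.
  case/connectP=> p; case: p => [_ ->|y p]; first by rewrite eqxx.
  rewrite /= => /andP[/eqP -> pa] ->; apply/orP; right.
  by apply/connectP; exists p.
case/orP=> [/eqP ->|]; first exact: connect0.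
case E: (par T x) => [u|] // H.
by apply: connect_trans H; apply: connect1; rewrite /= E.
Qed.

Lemma anc_refl T x : anc T x x.
Proof. exact: connect0. Qed.

Lemma anc_trans T a b c : anc T a b -> anc T b c -> anc T a c.
Proof. by move=> H1 H2; apply: connect_trans H2 H1. Qed.

Lemma anc_par T x u : par T x = Some u -> anc T u x.
Proof. by move=> E; rewrite ancE E anc_refl orbT. Qed.

Definition ord_ok T := forall v u, par T v = Some u -> u < v.

Lemma anc_le T a x : ord_ok T -> anc T a x -> a <= x.
Proof.
move=> Ho; elim/ord_ind: x => x IH; rewrite ancE.
case/orP=> [/eqP->//|]; case E: (par T x) => [u|] // H.
by apply: leq_trans (IH u (Ho _ _ E) H) (ltnW (Ho _ _ E)).
Qed.

Lemma anc_antisym T a x : ord_ok T -> anc T a x -> anc T x a -> a = x.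
Proof.
move=> Ho H1 H2; apply: val_inj; apply/eqP.
by rewrite eqn_leq (anc_le Ho H1) (anc_le Ho H2).
Qed.

Lemma anc_total T a b x : ord_ok T -> anc T a x -> anc T b x -> anc T a b || anc T b a.
Proof.
move=> Ho; elim/ord_ind: x => x IH; rewrite (ancE _ a).
case/orP=> [/eqP->|Ha]; first by move=> ->; rewrite orbT.
rewrite ancE; case/orP=> [/eqP Eb|Hb].
  by subst b; apply/orP; left; rewrite ancE; apply/orP; right.
move: Ha Hb; case E: (par T x) => [u|] // Ha Hb.
exact: (IH u (Ho _ _ E)).
Qed.

Lemma G1 T D x a : (forall y, y \in D -> par T y = pred_in D y) -> x \in D ->
  anc T a x = (a \in D) && (a <= x).
Proof.
move=> HD; elim/ord_ind: x => x IH xD; rewrite ancE HD //.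
case E: (pred_in D x) => [u|].
  have [uD ux Hu] := pred_inS E; rewrite IH //.
  apply/idP/idP.
    case/orP=> [/eqP->|/andP[-> au]]; first by rewrite xD leqnn.
    by rewrite (leq_trans au (ltnW ux)).
  case/andP=> aD; rewrite leq_eqVlt; case/orP=> [/eqP ax|ax].
    by rewrite (_ : a = x) ?eqxx // ; apply: val_inj.
  by rewrite aD (Hu a aD ax) orbT.
have Hn := pred_inN E; rewrite orbF; apply/idP/idP.
  by move/eqP->; rewrite xD leqnn.
case/andP=> aD ax; have xa := Hn a aD.
by apply/eqP; apply: val_inj; apply/eqP; rewrite eqn_leq ax xa.
Qed.

Lemma G2 T v x : ord_ok T -> anc T x v -> par T x = pred_in (chain T v) x.
Proof.
move=> Ho xv; case E: (par T x) => [u|].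
  symmetry; apply: omax_eq.
    rewrite !inE (Ho _ _ E) andbT; exact: anc_trans (anc_par E) xv.
  move=> z; rewrite !inE => /andP[zv zx].
  case/orP: (anc_total Ho zv xv) => H.
    move: H; rewrite ancE E; case/orP=> [/eqP Ez|H]; last exact: anc_le Ho H.
    by rewrite Ez ltnn in zx.
  by have := anc_le Ho H; rewrite leqNgt zx.
case E2: (pred_in _ x) => [z|] //.
have [] := pred_inS E2; rewrite inE => zv zx _.
case/orP: (anc_total Ho zv xv) => H.
  move: H; rewrite ancE E orbF => /eqP Ez.
  by rewrite Ez ltnn in zx.
by have := anc_le Ho H; rewrite leqNgt zx.
Qed.

Section ITree.
Variable T : tree n.
Hypothesis HT : is_itree T.

Lemma itree_ok : ord_ok T.
Proof. by case: HT => _ _ H _ v u /H []. Qed.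

Lemma par_verts x u : par T x = Some u -> x \in verts T /\ u \in verts T.
Proof. by case: HT => _ _ H _ /H []. Qed.

Lemma par_nverts x : x \notin verts T -> par T x = None.
Proof.
move=> xn; case E: (par T x) => [u|] //.
by have [xv _] := par_verts E; rewrite xv in xn.
Qed.

Lemma anc_verts a x : x \in verts T -> anc T a x -> a \in verts T.
Proof.
elim/ord_ind: x => x IH xv; rewrite ancE; case/orP=> [/eqP->//|].
case E: (par T x) => [u|] // H.
have [_ uv] := par_verts E; exact: IH (itree_ok E) uv H.
Qed.

Lemma root_anc rt y : rt \in verts T -> par T rt = None -> y \in verts T ->
  anc T rt y.
Proof.
move=> rv rN; elim/ord_ind: y => y IH yv; rewrite ancE.
case E: (par T y) => [u|].
  have [_ uv] := par_verts E; by rewrite IH ?orbT // (itree_ok E).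
by case: HT => _ _ _ /(_ rt y rv yv rN E) ->; rewrite eqxx.
Qed.

Lemma root_exists : exists2 rt, rt \in verts T & par T rt = None.
Proof.
case: HT => /set0Pn [x xv] _ _ _.
elim/ord_ind: x xv => x IH xv.
case E: (par T x) => [u|]; last by exists x.
have [_ uv] := par_verts E; exact: IH (itree_ok E) uv.
Qed.

Variable v : 'I_n.
Hypothesis vv : v \in verts T.

Definition Aset x := [set a | anc T a x && anc T a v].

Lemma Aset_n0 x : x \in verts T -> Aset x != set0.
Proof.
move=> xv; have [rt rv rN] := root_exists; apply/set0Pn; exists rt.
by rewrite inE !root_anc.
Qed.

Lemma cr_spec x : x \in verts T -> omax (Aset x) = Some (chainroot T v x).
Proof.
move=> xv; have [y Hy] := omax_some (Aset_n0 xv).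
by rewrite /chainroot -/(Aset x) Hy.
Qed.

Lemma cr_anc x : x \in verts T -> anc T (chainroot T v x) x /\ anc T (chainroot T v x) v.
Proof.
move=> xv; have [] := omaxP (cr_spec xv); rewrite inE => /andP[-> ->] _; done.
Qed.

Lemma cr_vC x : x \in verts T -> chainroot T v x \in verts T /\ chainroot T v x \in chain T v.
Proof.
move=> xv; have [_ H] := cr_anc xv; split; last by rewrite inE.
exact: anc_verts vv H.
Qed.

Lemma cr_C u : anc T u v -> chainroot T v u = u.
Proof.
move=> uv; rewrite /chainroot (@omax_eq _ u) //.
  by rewrite inE anc_refl uv.
move=> z; rewrite inE => /andP[zu _]; exact: anc_le itree_ok zu.
Qed.

Lemma cr_eqA x y : x \in verts T -> y \in verts T -> Aset x = Aset y ->
  chainroot T v x = chainroot T v y.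
Proof. by move=> xv yv E; apply: Some_inj; rewrite -cr_spec // -cr_spec // E. Qed.

Lemma cr_par x u : ~~ anc T x v -> par T x = Some u -> chainroot T v x = chainroot T v u.
Proof.
move=> xC E; have [xv uv] := par_verts E; apply: cr_eqA => //.
apply/setP=> a; rewrite !inE (ancE _ a x) E; case: (boolP (a == x)) => //= /eqP ->.
by rewrite (negbTE xC) !andbF.
Qed.

Lemma cr_desc x m : x \in verts T -> m \in verts T -> anc T x m -> ~~ anc T x v ->
  chainroot T v m = chainroot T v x.
Proof.
move=> xv mv xm xC; apply: cr_eqA => //; apply/setP=> a; rewrite !inE.
apply/idP/idP; case/andP=> H1 H2; rewrite H2 ?andbT.
  case/orP: (anc_total itree_ok H1 xm) => // H.
  by rewrite (anc_trans H H2) in xC.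
exact: anc_trans H1 xm.
Qed.

End ITree.

Lemma blk_cover (P S : {set {set 'I_n}}) B x : trivIset P -> S \subset P ->
  B \in P -> x \in B -> (x \in cover S) = (B \in S).
Proof.
move=> tP SP BP xB; apply/idP/idP; last by move=> BS; apply/bigcupP; exists B.
case/bigcupP=> B' B'S xB'.
have B'P : B' \in P by apply: (subsetP SP).
by rewrite -(def_pblock tP BP xB) (def_pblock tP B'P xB').
Qed.

Lemma union_cover (P : {set {set 'I_n}}) U : union_of_blocks P U ->
  U = cover (blocks_in P U).
Proof.
case=> S0 [SP ->]; apply/setP=> x; apply/idP/idP.
  case/bigcupP=> B BS xB; apply/bigcupP; exists B => //.
  rewrite inE (subsetP SP _ BS); apply/subsetP=> y yB; apply/bigcupP; by exists B.
case/bigcupP=> B; rewrite inE => /andP[_ /subsetP]; by apply.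
Qed.

Lemma blk_sub (P : {set {set 'I_n}}) U B x : trivIset P -> union_of_blocks P U ->
  B \in P -> x \in B -> (x \in U) = (B \subset U).
Proof.
move=> tP [S0 [SP E]] BP xB; apply/idP/idP; last by move/subsetP; apply.
rewrite E (blk_cover tP SP BP xB) => BS; apply/subsetP=> y yB; apply/bigcupP.
by exists B.
Qed.

Lemma cover_sub (P : {set {set 'I_n}}) U x : union_of_blocks P U -> x \in U -> x \in cover P.
Proof.
case=> S0 [SP ->]; case/bigcupP=> B BS xB; apply/bigcupP; exists B => //.
exact: (subsetP SP).
Qed.

Lemma connect_inv (e : rel {set 'I_n}) (S : {set {set 'I_n}}) B B' :
  (forall X Y, e X Y -> (X \in S) = (Y \in S)) -> connect e B B' -> (B \in S) = (B' \in S).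
Proof.
move=> He /connectP [p]; elim: p B => [|Y p IH] B /=; first by move=> _ ->.
by case/andP=> /He -> /IH.
Qed.

Section Main.
Variable P : {set {set 'I_n}}.
Hypothesis tP : trivIset P.
Variable T : tree n.
Hypothesis HT : pi_increasing P T.
Variable v1 : 'I_n.
Hypothesis v1v : v1 \in verts T.

Let itT : is_itree T. Proof. by case: HT. Qed.
Let ubT : union_of_blocks P (verts T). Proof. by case: HT. Qed.
Let pinc : forall B, B \in P -> B \subset verts T ->
        forall i j, i \in B -> j \in B -> i < j -> anc T i j.
Proof. by case: HT. Qed.

Definition Hprop W := forall x u, x \in verts T -> ~~ anc T x v1 -> par T x = Some u ->
  (x \in W) = (u \in W).
Definition Qprop W := forall x, x \in verts T -> ~~ anc T x v1 ->
  (x \in W) = (chainroot T v1 x \in W).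

Lemma nonC_par x : x \in verts T -> ~~ anc T x v1 -> exists u, par T x = Some u.
Proof.
move=> xv xC; case E: (par T x) => [u|]; first by exists u.
by rewrite (root_anc itT xv E v1v) in xC.
Qed.

Lemma Q_of_H W : Hprop W -> Qprop W.
Proof.
move=> H; elim/ord_ind=> x IH xv xC; have [u E] := nonC_par xv xC.
have [_ uv] := par_verts itT E.
rewrite (H _ _ xv xC E) (cr_par itT v1v xC E).
case: (boolP (anc T u v1)) => uC; first by rewrite (cr_C itT uC).
exact: IH (itree_ok itT E) uv uC.
Qed.

Lemma H_of_Q W : Qprop W -> Hprop W.
Proof.
move=> Q x u xv xC E; have [_ uv] := par_verts itT E.
rewrite (Q _ xv xC) (cr_par itT v1v xC E).
case: (boolP (anc T u v1)) => uC; first by rewrite (cr_C itT uC).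
by rewrite (Q _ uv uC).
Qed.

Lemma comp_of_Q W : union_of_blocks P W -> W \subset verts T -> Qprop W ->
  union_of_components P T v1 (blocks_in P W).
Proof.
move=> uW WT Q; split.
  apply/subsetP=> B; rewrite !inE => /andP[-> BW]; exact: subset_trans BW WT.
suff He : forall X Y, dep_edge P T v1 X Y -> (X \in blocks_in P W) = (Y \in blocks_in P W).
  move=> B B' BS Hc; rewrite -(connect_inv _ Hc) // => X Y /orP [/He //|/He ->] //.
move=> X Y; rewrite /dep_edge !inE => /and3P [/andP[XP XT] /andP[YP YT]].
case E: (omax X) => [m|] // /andP[mC /eqP YE].
have [mX _] := omaxP E; have mv : m \in verts T by apply: (subsetP XT).
rewrite XP YP /= -(blk_sub tP uW XP mX) (Q m mv) //.
have [cv _] := cr_vC itT v1v mv.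
rewrite YE (blk_sub tP uW (pblock_mem (cover_sub ubT cv))) ?mem_pblock ?(cover_sub ubT cv) //.
by move: mC; rewrite inE.
Qed.

Lemma Q_of_comp (S : {set {set 'I_n}}) W : union_of_components P T v1 S -> W = cover S -> Qprop W.
Proof.
case=> SB Scl -> x xv xC.
have xcP := cover_sub ubT xv.
set B := pblock P x.
have BP : B \in P := pblock_mem xcP.
have xB : x \in B by rewrite mem_pblock.
have BT : B \subset verts T by rewrite -(blk_sub tP ubT BP xB).
have [m E] : exists m, omax B = Some m by apply: omax_some; apply/set0Pn; exists x.
have [mB Hm] := omaxP E.
have mv : m \in verts T by apply: (subsetP BT).
have xm : anc T x m.
  case: (boolP (x == m)) => [/eqP ->|xm]; first exact: anc_refl.
  apply: (pinc BP BT xB mB); rewrite ltn_neqAle Hm // andbT.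
  by apply: contra xm => /eqP H; apply/eqP; apply: val_inj.
have mC : ~~ anc T m v1 by apply: contra xC => H; exact: anc_trans xm H.
have [cv _] := cr_vC itT v1v mv.
have ccP := cover_sub ubT cv.
set B' := pblock P (chainroot T v1 m).
have B'P : B' \in P := pblock_mem ccP.
have cB' : chainroot T v1 m \in B' by rewrite mem_pblock.
have SP : S \subset P.
  apply/subsetP=> Z /(subsetP SB); rewrite inE; by case/andP.
have Hed : dep_edge P T v1 B B'.
  rewrite /dep_edge !inE BP BT B'P /= E. rewrite inE mC eqxx andbT /=.
  by rewrite andbT -(blk_sub tP ubT B'P cB').
rewrite (blk_cover tP SP BP xB) -(cr_desc itT v1v xv mv xm xC).
rewrite (blk_cover tP SP B'P cB').
apply/idP/idP => H.
  by apply: (Scl B) => //; apply: connect1; rewrite /dep_uedge Hed.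
by apply: (Scl B') => //; apply: connect1; rewrite /dep_uedge Hed orbT.
Qed.


Lemma tree_eq (A B : tree n) : verts A = verts B -> (forall x, par A x = par B x) -> A = B.
Proof.
case: A B => [VA fA] [VB fB] /= -> H; congr pair; apply/ffunP=> x; exact: H x.
Qed.

Lemma ub_diff U V : union_of_blocks P U -> union_of_blocks P V -> union_of_blocks P (U :\: V).
Proof.
move=> uU uV; exists (blocks_in P (U :\: V)); split.
  by apply/subsetP=> B; rewrite inE => /andP[].
apply/setP=> x; apply/idP/idP; last first.
  case/bigcupP=> B; rewrite inE => /andP[_ /subsetP]; by apply.
move=> xUV; have := xUV; rewrite inE => /andP[xV xU].
have xcP := cover_sub uU xU.
have BP := pblock_mem xcP; have xB : x \in pblock P x by rewrite mem_pblock.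
apply/bigcupP; exists (pblock P x) => //; rewrite inE BP /=.
apply/subsetP=> y yB; rewrite inE.
rewrite (blk_sub tP uV BP yB) -(blk_sub tP uV BP xB) xV /=.
by rewrite (blk_sub tP uU BP yB) -(blk_sub tP uU BP xB).
Qed.

Section Splice.
Variables (V1 : {set 'I_n}) (T1 T2 : tree n) (v2 : 'I_n).
Hypothesis Hd : spl_decomp P T V1 v1 T1 T2 v2.

Let Hd' := Hd.
Let pT1 : pi_increasing P T1. Proof. by case: Hd' => [[]]. Qed.
Let pT2 : pi_increasing P T2. Proof. by case: Hd' => [[]]. Qed.
Let it1 : is_itree T1. Proof. by case: pT1. Qed.
Let it2 : is_itree T2. Proof. by case: pT2. Qed.
Let vT1 : verts T1 = V1. Proof. by case: Hd' => _ []. Qed.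
Let vT2 : verts T2 = verts T :\: V1. Proof. by case: Hd' => _ []. Qed.
Let v2v : v2 \in verts T2. Proof. by case: Hd'. Qed.
Let v21 : v2 < v1. Proof. by case: Hd'. Qed.
Let ET : T = splice T1 v1 T2 v2. Proof. by case: Hd'. Qed.

Lemma spl_par x : par T x =
  if x \in chain T1 v1 :|: chain T2 v2 then pred_in (chain T1 v1 :|: chain T2 v2) x
  else if x \in verts T1 then par T1 x else par T2 x.
Proof. by rewrite {1}ET /par /= ffunE. Qed.

Hypothesis v1V1 : v1 \in V1.

Lemma spl_chain : chain T v1 = chain T1 v1 :|: chain T2 v2.
Proof.
set D := _ :|: _.
have HD : forall y, y \in D -> par T y = pred_in D y by move=> y yD; rewrite spl_par yD.
have v1D : v1 \in D by rewrite !inE anc_refl.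
apply/setP=> a; rewrite [in LHS]inE (G1 _ HD v1D).
case aD: (a \in D) => //=; move: aD; rewrite !inE; case/orP=> H.
  exact: anc_le (itree_ok it1) H.
exact: leq_trans (anc_le (itree_ok it2) H) (ltnW v21).
Qed.

Lemma c1V a : anc T1 a v1 -> a \in V1.
Proof. rewrite -vT1; apply: anc_verts => //; by rewrite vT1. Qed.
Lemma c2V a : anc T2 a v2 -> (a \in verts T) && (a \notin V1).
Proof. by move=> H; have := anc_verts it2 v2v H; rewrite vT2 inE andbC. Qed.

Lemma chain1E : chain T1 v1 = chain T v1 :&: V1.
Proof.
apply/setP=> a; rewrite spl_chain !inE; case H1: (anc T1 a v1) => /=.
  by rewrite c1V.
by case H2: (anc T2 a v2) => //=; have /andP[_ /negbTE ->] := c2V H2.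
Qed.

Lemma chain2E : chain T2 v2 = chain T v1 :&: (verts T :\: V1).
Proof.
apply/setP=> a; rewrite spl_chain !inE; case H2: (anc T2 a v2) => /=.
  by rewrite orbT andbC andbT andbC c2V.
rewrite orbF; case H1: (anc T1 a v1) => //=.
by rewrite c1V.
Qed.

Lemma v2E : omax (chain T v1 :&: (verts T :\: V1)) = Some v2.
Proof.
rewrite -chain2E; apply: omax_eq; first by rewrite inE anc_refl.
move=> z; rewrite inE; exact: anc_le (itree_ok it2).
Qed.

Lemma par1E x : par T1 x = if x \in V1 then
  (if x \in chain T v1 then pred_in (chain T v1 :&: V1) x else par T x) else None.
Proof.
case: ifP => xV; last by apply: par_nverts; rewrite ?vT1 ?xV.
case: ifP => xC.
  rewrite -chain1E; apply: G2 (itree_ok it1) _.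
  by rewrite -(in_set (fun a => anc T1 a v1)) -/(chain T1 v1) chain1E inE xC.
by rewrite spl_par -spl_chain xC vT1 xV.
Qed.

Lemma par2E x : par T2 x = if x \in verts T :\: V1 then
  (if x \in chain T v1 then pred_in (chain T v1 :&: (verts T :\: V1)) x else par T x) else None.
Proof.
case: ifP => xV; last by apply: par_nverts; rewrite ?vT2 ?xV.
case: ifP => xC.
  rewrite -chain2E; apply: G2 (itree_ok it2) _.
  by rewrite -(in_set (fun a => anc T2 a v2)) -/(chain T2 v2) chain2E inE xC.
rewrite spl_par -spl_chain xC vT1.
by move: xV; rewrite inE => /andP[/negbTE -> _].
Qed.

Lemma spl_H : Hprop V1.
Proof.
move=> x u xv xC E; move: E; rewrite spl_par -spl_chain inE (negbTE xC) vT1.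
case: ifP => xV E.
  by have [_] := par_verts it1 E; rewrite vT1 => ->.
have [_] := par_verts it2 E; rewrite vT2 inE => /andP[/negbTE -> _]; done.
Qed.

End Splice.


Definition subT W : tree n := (W, [ffun x => if x \in W then
  (if x \in chain T v1 then pred_in (chain T v1 :&: W) x else par T x) else None]).

Section Sub.
Variable W : {set 'I_n}.
Hypotheses (WT : W \subset verts T) (HW : Hprop W) (uW : union_of_blocks P W)
  (Wn0 : W != set0).

Lemma subP x : par (subT W) x = if x \in W then
  (if x \in chain T v1 then pred_in (chain T v1 :&: W) x else par T x) else None.
Proof. by rewrite /par /= ffunE. Qed.

Lemma DW_n0 : chain T v1 :&: W != set0.
Proof.
case/set0Pn: Wn0 => x; elim/ord_ind: x => x IH xW.
have xv : x \in verts T := subsetP WT x xW.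
case: (boolP (anc T x v1)) => xC.
  by apply/set0Pn; exists x; rewrite !inE xC.
have [u E] := nonC_par xv xC.
apply: (IH u (itree_ok itT E)); by rewrite -(HW xv xC E).
Qed.

Lemma sub_itree : is_itree (subT W).
Proof.
case: itT => _ Hpos _ _; split => //.
- by move=> v vW; apply: Hpos; apply: (subsetP WT).
- move=> v u; rewrite subP; case: ifP => // vW; case: ifP => vC E.
    by have [] := pred_inS E; rewrite inE => /andP[_ ->] -> _.
  have vv : v \in verts T := subsetP WT v vW.
  have vC' : ~~ anc T v v1 by rewrite inE in vC; rewrite vC.
  by rewrite /verts /= -(HW vv vC' E) vW (itree_ok itT E).
- have key : forall v, v \in W -> par (subT W) v = None ->
      v \in chain T v1 :&: W /\ pred_in (chain T v1 :&: W) v = None.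
    move=> v vW; rewrite subP vW; case: ifP => vC E; first by rewrite inE vC vW.
    have vv : v \in verts T := subsetP WT v vW.
    have vC' : ~~ anc T v v1 by rewrite inE in vC; rewrite vC.
    have [u E2] := nonC_par vv vC'; by rewrite E2 in E.
  move=> v w vW wW /(key _ vW) [vD vN] /(key _ wW) [wD wN].
  apply: val_inj; apply/eqP; by rewrite eqn_leq (pred_inN vN) // (pred_inN wN).
Qed.

Lemma sub_anc_chain x a : x \in chain T v1 :&: W ->
  anc (subT W) a x = (a \in chain T v1 :&: W) && (a <= x).
Proof.
apply: G1 => y yD; rewrite subP; move: yD; rewrite inE => /andP[-> ->] //.
Qed.

Lemma sub_anc x a : x \in W -> a \in W -> anc T a x -> anc (subT W) a x.
Proof.
elim/ord_ind: x => x IH xW aW; rewrite ancE; case/orP=> [/eqP->|]; first exact: anc_refl.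
case E: (par T x) => [u|] // au.
have xv : x \in verts T := subsetP WT x xW.
case: (boolP (anc T x v1)) => xC.
  rewrite sub_anc_chain; last by rewrite !inE xC.
  rewrite !inE aW (anc_trans au (anc_trans (anc_par E) xC)) /=.
  exact: leq_trans (anc_le (itree_ok itT) au) (ltnW (itree_ok itT E)).
have uW' : u \in W by rewrite -(HW xv xC E).
apply: anc_trans (IH u (itree_ok itT E) uW' aW au) _; apply: anc_par.
by rewrite subP xW inE (negbTE xC).
Qed.

Lemma sub_pinc : pi_increasing P (subT W).
Proof.
split; [exact: sub_itree | exact: uW |].
move=> B BP BW i j iB jB ij; apply: sub_anc.
- exact: (subsetP BW).
- exact: (subsetP BW).
apply: (pinc BP (subset_trans BW WT) iB jB ij).
Qed.

Lemma sub_chain w : omax (chain T v1 :&: W) = Some w -> chain (subT W) w = chain T v1 :&: W.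
Proof.
move=> /omaxP [wD Hw]; apply/setP=> a; rewrite [in LHS]inE sub_anc_chain //.
by case aD: (a \in _) => //=; apply: Hw.
Qed.

End Sub.

Lemma construct (V1 : {set 'I_n}) : V1 \proper verts T -> union_of_blocks P V1 -> v1 \in V1 ->
  Hprop V1 -> exists T1 T2 v2, spl_decomp P T V1 v1 T1 T2 v2.
Proof.
move=> pV uV1 v1V H1.
have sV := proper_sub pV.
set W2 := verts T :\: V1.
have H2 : Hprop W2.
  move=> x u xv xC E; have [_ uv] := par_verts itT E.
  by rewrite !inE xv uv (H1 _ _ xv xC E).
have uW2 : union_of_blocks P W2 by apply: ub_diff.
have W2T : W2 \subset verts T by apply: subsetDl.
have W2n0 : W2 != set0.
  case/properP: pV => _ [x xv xV]; apply/set0Pn; exists x; by rewrite inE xV.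
have V1n0 : V1 != set0 by apply/set0Pn; exists v1.
have [w Hw] := omax_some (DW_n0 W2T H2 W2n0).
have Hv1 : omax (chain T v1 :&: V1) = Some v1.
  apply: omax_eq; first by rewrite !inE anc_refl v1V.
  move=> z; rewrite !inE => /andP[zC _]; exact: anc_le (itree_ok itT) zC.
have [wD _] := omaxP Hw.
move: (wD); rewrite !inE => /andP[wC /andP[wV1 wv]].
exists (subT V1), (subT W2), w; split.
- by split; apply: sub_pinc.
- by [].
- by rewrite /verts /= inE wV1 wv.
- rewrite ltn_neqAle (anc_le (itree_ok itT) wC) andbT.
  by apply: contra wV1 => /eqP E; rewrite (_ : w = v1) //; apply: val_inj.
apply: tree_eq.
  apply/setP=> x; rewrite /verts /= !inE.
  by case xV: (x \in V1); rewrite ?orbF //= (subsetP sV).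
move=> x; rewrite {2}/par /splice /= ffunE (sub_chain Hv1) (sub_chain Hw).
have -> : chain T v1 :&: V1 :|: chain T v1 :&: W2 = chain T v1.
  apply/setP=> a; rewrite !inE; case aC: (anc T a v1) => //=.
  by rewrite (anc_verts itT v1v aC) andbT orbN.
case: ifP => xC.
  by apply: G2 (itree_ok itT) _; rewrite inE in xC.
rewrite /verts /=; case: ifP => xV.
  by rewrite subP xV xC.
rewrite subP xC; case: ifP => // /negbT; rewrite inE xV /= => xv.
by apply: (par_nverts itT).
Qed.

End Main.
End Gen.

Unset Implicit Arguments.
Theorem lemma3p9 (r : nat) (P : {set {set 'I_r.+1}}) (T : tree r.+1)
    (V1 : {set 'I_r.+1}) (v1 : 'I_r.+1) :
  2 <= r ->
  partition P [set i : 'I_r.+1 | 0 < i] ->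
  [set (inord 1 : 'I_r.+1)] \in P ->
  pi_increasing P T ->
  V1 \proper verts T -> V1 != set0 -> union_of_blocks P V1 -> v1 \in V1 ->
  ((exists (T1 T2 : tree r.+1) (v2 : 'I_r.+1), spl_decomp P T V1 v1 T1 T2 v2)
   <-> (exists S, union_of_components P T v1 S /\ V1 = cover S))
  /\ (forall (T1 T2 T1' T2' : tree r.+1) (v2 v2' : 'I_r.+1),
      spl_decomp P T V1 v1 T1 T2 v2 ->
      spl_decomp P T V1 v1 T1' T2' v2' ->
      [/\ T1 = T1', T2 = T2' & v2 = v2']).
Proof.
move=> _ /and3P [_ tP _] _ HT pV _ uV1 v1V.
have sV := proper_sub pV.
have v1v : v1 \in verts T := subsetP sV v1 v1V.
split.
  split.
    case=> T1 [T2 [v2 Hd]].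
    have HQ := Q_of_H HT v1v (spl_H Hd).
    exists (blocks_in P V1); split; last exact: union_cover.
    exact: (comp_of_Q tP HT v1v uV1 sV HQ).
  case=> S [Hc E].
  apply: (construct tP HT v1v pV uV1 v1V).
  exact: (H_of_Q HT v1v (Q_of_comp tP HT v1v Hc E)).
move=> T1 T2 T1' T2' v2 v2' Hd Hd'.
have Hd1 := Hd; have Hd1' := Hd'.
case: Hd1 => _ [e1 e2] _ _ _; case: Hd1' => _ [e1' e2'] _ _ _.
split.
- apply: tree_eq; first by rewrite e1 e1'.
  by move=> x; rewrite (par1E Hd v1V) (par1E Hd' v1V).
- apply: tree_eq; first by rewrite e2 e2'.
  by move=> x; rewrite (par2E Hd v1V) (par2E Hd' v1V).
apply: Some_inj; by rewrite -(v2E Hd v1V) -(v2E Hd' v1V).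
Qed.
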